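(* Let $L>0,\alpha>0$. For $\lambda>0$ and $b\in\Lambda(\alpha)$, it holds that $\mu(\lambda,b)\ge\mu(0,b)$.
   Context: $\Lambda(\alpha)$: $b\in C^1(\mathbb R)$, $b\ge0$, $L$-periodic, $\int_0^Lb=\alpha L$. For $\lambda\in\mathbb R$, $\mu(\lambda,b)$ denotes the principal eigenvalue of $-\psi''+2\lambda\psi'-b\psi=\mu\psi$ with $\psi$ positive and $L$-periodic, i.e. the eigenvalue having a positive $L$-periodic eigenfunction. *)

(* Defs.v *)
From Stdlib Require Import Reals.
From Coquelicot Require Import Coquelicot.
Open Scope R_scope.

Definition periodic (L : R) (f : R -> R) : Prop := forall x, f (x + L) = f x.

Definition C1 (b : R -> R) : Prop :=
  forall x, ex_derive b x /\ continuous (Derive b) x.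

Definition in_Lambda (L alpha : R) (b : R -> R) : Prop :=
  C1 b /\ (forall x, 0 <= b x) /\ periodic L b /\ RInt b 0 L = alpha * L.

(* mu is the principal eigenvalue of  -psi'' + 2 lam psi' - b psi = mu psi,
   i.e. the eigenvalue having a positive L-periodic (twice differentiable)
   eigenfunction psi. *)
Definition is_principal_eigenvalue (L lam : R) (b : R -> R) (mu : R) : Prop :=
  exists psi dpsi ddpsi : R -> R,
    (forall x, is_derive psi x (dpsi x)) /\
    (forall x, is_derive dpsi x (ddpsi x)) /\
    periodic L psi /\
    (forall x, 0 < psi x) /\
    (forall x, - ddpsi x + 2 * lam * dpsi x - b x * psi x = mu * psi x).

(* Main.v *)
Require Import Defs.
From Stdlib Require Import Reals Lra.
From Coquelicot Require Import Coquelicot.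
Open Scope R_scope.

Lemma dmul (f g : R -> R) x df dg :
  is_derive f x df -> is_derive g x dg ->
  is_derive (fun t => f t * g t) x (df * g x + f x * dg).
Proof.
  intros Hf Hg. apply (is_derive_mult f g x df dg Hf Hg). intros; apply Rmult_comm.
Qed.

Lemma dadd (f g : R -> R) x df dg :
  is_derive f x df -> is_derive g x dg ->
  is_derive (fun t => f t + g t) x (df + dg).
Proof. intros Hf Hg. apply (is_derive_plus f g x df dg Hf Hg). Qed.

Lemma dsub (f g : R -> R) x df dg :
  is_derive f x df -> is_derive g x dg ->
  is_derive (fun t => f t - g t) x (df - dg).
Proof. intros Hf Hg. apply (is_derive_minus f g x df dg Hf Hg). Qed.

Lemma dval (f : R -> R) x l l' : is_derive f x l -> l = l' -> is_derive f x l'.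
Proof. intros H ->; exact H. Qed.

Lemma per_deriv L f df : (forall x, is_derive f x (df x)) -> periodic L f -> periodic L df.
Proof.
  intros Hd Hp x.
  assert (H : is_derive (fun y => f (y + L)) x (df (x + L))).
  { eapply dval.
    - apply (is_derive_comp f (fun y => y + L) x (df (x+L)) 1).
      + apply Hd.
      + eapply dval. apply dadd. apply is_derive_id. apply is_derive_const.
        simpl. unfold one, zero; simpl. ring.
    - simpl. unfold scal; simpl. unfold mult; simpl. ring. }
  apply (is_derive_ext _ f) in H; [| intros; apply Hp].
  apply is_derive_unique in H. rewrite (is_derive_unique _ _ _ (Hd x)) in H. auto.
Qed.

Theorem mainTheorem15 (L alpha lam : R) (b : R -> R) (mu_lam mu_0 : R) :
  0 < L -> 0 < alpha -> 0 < lam ->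
  in_Lambda L alpha b ->
  is_principal_eigenvalue L lam b mu_lam ->
  is_principal_eigenvalue L 0 b mu_0 ->
  mu_lam >= mu_0.
Proof.
  intros HL _ _ _ [psi [dpsi [ddpsi [H1 [H2 [H3 [H4 H5]]]]]]]
    [phi [dphi [ddphi [G1 [G2 [G3 [G4 G5]]]]]]].
  apply Rnot_lt_ge; intro Hlt.
  set (K := fun x => dphi x * (psi x * psi x) * / phi x - psi x * dpsi x + lam * (psi x * psi x)).
  set (dK := fun x => (mu_lam - mu_0) * (psi x * psi x)
                      - (dpsi x - dphi x * psi x / phi x) ^ 2).
  assert (HK : forall x, is_derive K x (dK x)).
  { intro x. assert (Hp := G4 x).
    eapply dval.
    - apply dadd. apply dsub. apply dmul. apply dmul. apply G2. apply dmul; apply H1.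
      apply is_derive_inv. apply G1. lra.
      apply dmul. apply H1. apply H2.
      apply is_derive_scal. apply dmul; apply H1.
    - unfold dK. specialize (H5 x). specialize (G5 x).
      assert (E1 : ddpsi x = 2 * lam * dpsi x - b x * psi x - mu_lam * psi x) by lra.
      assert (E2 : ddphi x = - b x * phi x - mu_0 * phi x) by lra.
      rewrite E1, E2. simpl. field. lra. }
  assert (Kper : K L = K 0).
  { assert (P1 := per_deriv L psi dpsi H1 H3).
    assert (P2 := per_deriv L phi dphi G1 G3).
    assert (P3 : periodic L phi) by exact G3.
    unfold K. rewrite <- (Rplus_0_l L). rewrite P1, P2, P3, H3. reflexivity. }
  destruct (MVT_gen K 0 L dK) as [c [_ Hc]].
  - intros; apply HK.
  - intros x _. apply continuity_pt_filterlim. apply (ex_derive_continuous K x).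
    eexists; apply HK.
  - rewrite Kper in Hc.
    assert (dK c < 0).
    { unfold dK. assert (Hp := H4 c).
      assert (0 < psi c * psi c) by (apply Rmult_lt_0_compat; lra).
      assert (0 <= (dpsi c - dphi c * psi c / phi c) ^ 2) by (apply pow2_ge_0).
      nra. }
    nra.
Qed.
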